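(* On a two-letter alphabet, there exists a $2$-regular word of length $n\ge 1$ if and only if $n=4k$ for some integer $k\ge 2$.
   Context: For a word $u=u_1\cdots u_m$ over an alphabet $\mathcal A$ with $b$ letters and an integer $r\ge -1$, $u$ is $r$-regular if for every $k=0,1,\dots,r$ the sum $\sum_{1\le t\le m,\ u_t=c} t^k$ is the same for all letters $c\in\mathcal A$ (a letter not occurring contributes $0$). Here $b=2$. *)

(* Defs.v *)
From mathcomp Require Import all_boot.
Set Implicit Arguments. Unset Strict Implicit. Unset Printing Implicit Defensive.

(* For a word u = u_1 ... u_m (an m.-tuple over the alphabet A; position
   t : 'I_m corresponds to the 1-based position t+1), the power sum of
   letter c with exponent k:  \sum_{1<=t<=m, u_t = c} t^k. *)
Definition power_sum (A : eqType) (m : nat) (u : m.-tuple A) (c : A) (k : nat) : nat :=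
  \sum_(t < m | tnth u t == c) (t.+1) ^ k.

Definition regular (A : finType) (m : nat) (r : nat) (u : m.-tuple A) : Prop :=
  forall k : nat, k <= r -> forall c d : A, power_sum u c k = power_sum u d k.

(* Main.v *)
Require Import Defs.
From mathcomp Require Import all_boot zify.
Set Implicit Arguments. Unset Strict Implicit.
Definition tm (j : nat) : bool := j \in [:: 0; 3; 5; 6].
Definition bal (f : nat -> bool) n := forall k, k <= 2 ->
  \sum_(0 <= t < n | f t) t.+1 ^ k = \sum_(0 <= t < n | ~~ f t) t.+1 ^ k.

Lemma bal_ext f s m : (forall j, f (j + s) = tm (j %% 8)) -> bal f s -> bal f (s + 8 * m).
Proof.
move=> hf hs; elim: m => [|m IH]; first by rewrite muln0 addn0.
move=> k hk.
have -> : s + 8 * m.+1 = (s + 8 * m) + 8 by lia.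
rewrite (big_cat_nat _ (n := s + 8 * m)) //=; last by lia.
rewrite [RHS](big_cat_nat _ (n := s + 8 * m)) //=; last by lia.
rewrite IH //; congr (_ + _).
rewrite -{1 3}(add0n (s + 8 * m)) !big_addn.
have -> : s + 8 * m + 8 - (s + 8 * m) = 8 by lia.
have E : forall i, f (i + (s + 8 * m)) = tm (i %% 8).
  move=> i; have -> : i + (s + 8 * m) = (m * 8 + i) + s by lia.
  by rewrite hf modnMDl.
under eq_bigl do rewrite E.
under [RHS]eq_bigl do rewrite E.
rewrite big_mkcond [RHS]big_mkcond /=.
rewrite !big_nat_recr //= !big_geq //.
set x := s + 8 * m.
case: k hk => [|[|[|k]]] // _; rewrite ?expn0 ?expn1; nia.
Qed.
Lemma two_elems (A : finType) (hA : #|A| = 2) :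
  exists a b : A, a != b /\ forall c, c = a \/ c = b.
Proof.
have : 1 < #|A| by rewrite hA.
case/card_gt1P => a [b [_ _ ab]]; exists a, b; split => // c.
case: (eqVneq c a) => [->|ca]; first by left.
case: (eqVneq c b) => [->|cb]; first by right.
exfalso; have := max_card [set c; a; b].
by rewrite hA -setUA cardsU1 cards2 !inE (negbTE ca) (negbTE cb) ab.
Qed.

Lemma sum_lin n : 2 * \sum_(t < n) t.+1 = n * n.+1.
Proof.
elim: n => [|n IH]; first by rewrite big_ord0.
rewrite big_ord_recr /= mulnDr IH; lia.
Qed.

Lemma sum_const1 n : \sum_(t < n) t.+1 ^ 0 = n.
Proof. by rewrite (eq_bigr (fun _ => 1)) // sum_nat_const card_ord muln1. Qed.

Definition w12 (t : nat) : bool := t \in [:: 0; 2; 6; 7; 8; 10].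
Definition f_even (t : nat) := tm (t %% 8).
Definition f_odd (t : nat) := if t < 12 then w12 t else tm ((t - 12) %% 8).

Lemma bal_even m : bal f_even (8 * m).
Proof.
rewrite -(add0n (8 * m)); apply: bal_ext.
  by move=> j; rewrite addn0.
by move=> k _; rewrite !big_geq.
Qed.

Lemma bal_odd m : bal f_odd (12 + 8 * m).
Proof.
apply: bal_ext.
  by move=> j; rewrite /f_odd addnK ltnNge leq_addl.
move=> k hk; rewrite big_mkcond [RHS]big_mkcond /=.
rewrite !big_nat_recr //= !big_geq //.
by case: k hk => [|[|[|k]]].
Qed.

Lemma ps_a (A : finType) (a b : A) (ab : a != b) n (f : nat -> bool) k :
  power_sum [tuple (if f i then a else b) | i < n] a k = \sum_(0 <= t < n | f t) t.+1 ^ k.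
Proof.
rewrite /power_sum big_mkord; apply: eq_bigl => t; rewrite tnth_mktuple.
by case: (f t); rewrite ?eqxx // eq_sym (negbTE ab).
Qed.

Lemma ps_b (A : finType) (a b : A) (ab : a != b) n (f : nat -> bool) k :
  power_sum [tuple (if f i then a else b) | i < n] b k = \sum_(0 <= t < n | ~~ f t) t.+1 ^ k.
Proof.
rewrite /power_sum big_mkord; apply: eq_bigl => t; rewrite tnth_mktuple.
by case: (f t); rewrite ?eqxx // (negbTE ab).
Qed.

Lemma ps_b' (A : finType) (a b : A) (ab : a != b) (hc : forall c, c = a \/ c = b)
  n (u : n.-tuple A) k :
  power_sum u b k = \sum_(t < n | ~~ (tnth u t == a)) t.+1 ^ k.
Proof.
rewrite /power_sum; apply: eq_bigl => t.
by case: (hc (tnth u t)) => ->; rewrite ?eqxx // ?(negbTE ab) // eq_sym (negbTE ab).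
Qed.

Lemma sum4 (P : pred 'I_4) (F : 'I_4 -> nat) :
  \sum_(t < 4 | P t) F t = \sum_(t < 4) (if P t then F t else 0).
Proof. exact: big_mkcond. Qed.

Theorem mainTheorem10 (A : finType) (hA : #|A| = 2) (n : nat) (hn : 1 <= n) :
  (exists u : n.-tuple A, regular 2 u) <-> (exists k : nat, 2 <= k /\ n = 4 * k).
Proof.
have [a [b [ab hc]]] := two_elems hA.
have reg_of : forall m f, bal f m -> exists u : m.-tuple A, regular 2 u.
  move=> m f hf; exists [tuple (if f i then a else b) | i < m] => k hk c d.
  have E : power_sum [tuple (if f i then a else b) | i < m] a k =
           power_sum [tuple (if f i then a else b) | i < m] b k.
    by rewrite ps_a // ps_b // hf.
  by case: (hc c) => ->; case: (hc d) => ->.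
split.
- case=> u hu.
  have tot : forall k, power_sum u a k + power_sum u b k = \sum_(t < n) t.+1 ^ k.
    by move=> k; rewrite (ps_b' ab hc) [RHS](bigID (fun t => tnth u t == a)).
  have h0 := tot 0; have h1 := tot 1.
  rewrite -(hu 0 isT a b) sum_const1 in h0.
  rewrite -(hu 1 isT a b) in h1.
  have h1' := sum_lin n.
  rewrite (eq_bigr (fun t : 'I_n => t.+1)) in h1; last by move=> t _; rewrite expn1.
  set p0 := power_sum u a 0 in h0; set p1 := power_sum u a 1 in h1.
  have e4 : 4 * p1 = 4 * (p0 * p0) + 2 * p0 by rewrite -h1 -h0 in h1'; nia.
  have ek : n = 4 * (p1 - p0 * p0) by lia.
  exists (p1 - p0 * p0); split => //.
  case E: (p1 - p0 * p0) => [|[|k]]; first by lia.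
  + exfalso; rewrite E muln1 in ek; clear -ab hc ek hu; subst n.
    have h2 := hu 2 isT a b; have h1'' := hu 1 isT a b.
    rewrite (ps_b' ab hc) in h2; rewrite (ps_b' ab hc) in h1''.
    rewrite /power_sum in h2 h1''; move: h2 h1''.
    rewrite !(sum4 (fun t => tnth u t == a)) !(sum4 (fun t => tnth u t != a)) !big_ord_recr !big_ord0 /=.
    by do 4 case: (tnth u _ == a).
  + by [].
- case=> k [hk ->].
  have hk2 := odd_double_half k; rewrite -muln2 in hk2.
  case/boolP: (odd k) => ok; rewrite ?ok ?(negbTE ok) /= in hk2.
  + have -> : 4 * k = 12 + 8 * (k./2 - 1) by lia.
    apply: reg_of; exact: bal_odd.
  + have -> : 4 * k = 8 * k./2 by lia.
    apply: reg_of; exact: bal_even.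
Qed.
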